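(* Let $\sigma$ be a partial action of a locally compact Hausdorff group $G$ on a locally compact Hausdorff space $X$, and let $\sigma^e$ be its enveloping action on the enveloping space $X^e$. The following are equivalent: (1) $X^e$ is locally compact Hausdorff and $\sigma^e$ is a proper action; (2) for every net $\{(t_i,x_i)\}_{i\in I}\subseteq\Gamma_\sigma$ such that $\{(\sigma_{t_i}(x_i),x_i)\}_{i\in I}$ converges to a point of $X\times X$, there is a subnet of $\{(t_i,x_i)\}_{i\in I}$ converging to a point of $\Gamma_\sigma$; (3) the map $F_\sigma\colon\Gamma_\sigma\to X\times X$, $F_\sigma(t,x)=(\sigma_t(x),x)$, is proper.
   Context: A topological partial action $\sigma=(\{X_t\},\{\sigma_t\})$: open $X_t\subseteq X$, homeomorphisms $\sigma_t\colon X_{t^{-1}}\to X_t$, $X_e=X$, $\sigma_e=\mathrm{id}$, $\sigma_s(X_{s^{-1}}\cap X_t)=X_s\cap X_{st}$, $\sigma_s\sigma_t=\sigma_{st}$ on $X_{t^{-1}}\cap X_{t^{-1}s^{-1}}$, with $\Gamma_\sigma:=\{(t,x)\in G\times X:x\in X_{t^{-1}}\}$ open and $(t,x)\mapsto\sigma_t(x)$ continuous on it. The enveloping action $\sigma^e$ is (up to isomorphism) a global action of $G$ on a topological space $X^e$ with $X$ open in $X^e$, $X_t=X\cap\sigma^e_t(X)$, $\sigma_t=\sigma^e_t$ on $X_{t^{-1}}$, and $X^e=\bigcup_t\sigma^e_t(X)$. A global action $\sigma^e$ is proper if $(t,x)\mapsto(\sigma^e_t(x),x)$, $G\times X^e\to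 X^e\times X^e$, is proper (preimages of compact sets compact). *)

(* Defs.v *)
From HB Require Import structures.
From mathcomp Require Import all_boot all_order all_algebra.
From mathcomp Require Import all_classical all_reals all_analysis.
Set Implicit Arguments. Unset Strict Implicit. Unset Printing Implicit Defensive.
Local Open Scope classical_set_scope.

Record topgroup := TopGroup {
  tg_carrier :> topologicalType;
  tg_mul : tg_carrier -> tg_carrier -> tg_carrier;
  tg_inv : tg_carrier -> tg_carrier;
  tg_one : tg_carrier;
  tg_mulA : forall a b c, tg_mul a (tg_mul b c) = tg_mul (tg_mul a b) c;
  tg_mul1g : forall a, tg_mul tg_one a = a;
  tg_mulg1 : forall a, tg_mul a tg_one = a;
  tg_mulVg : forall a, tg_mul (tg_inv a) a = tg_one;
  tg_mulgV : forall a, tg_mul a (tg_inv a) = tg_one;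
  tg_mul_cont : continuous (fun p : tg_carrier * tg_carrier => tg_mul p.1 p.2);
  tg_inv_cont : continuous tg_inv
}.

Arguments tg_mul {_}. Arguments tg_inv {_}. Arguments tg_one {_}.

(* Topological partial action sigma = ({X_t}, {sigma_t}) of G on X:
   pa_dom t = X_t, pa_act t = sigma_t (only meaningful on X_{t^-1}). *)
Record partial_action (G : topgroup) (X : topologicalType) := PartialAction {
  pa_dom : G -> set X;
  pa_act : G -> X -> X;
  pa_dom_open : forall t, open (pa_dom t);
  pa_dom_one : pa_dom tg_one = setT;
  pa_act_one : forall x, pa_act tg_one x = x;
  pa_act_maps : forall t x, pa_dom (tg_inv t) x -> pa_dom t (pa_act t x);
  pa_act_cont : forall t, {within pa_dom (tg_inv t), continuous (pa_act t)};
  pa_act_homeo : forall t, exists g : X -> X,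
      [/\ forall y, pa_dom t y -> pa_dom (tg_inv t) (g y),
          forall x, pa_dom (tg_inv t) x -> g (pa_act t x) = x,
          forall y, pa_dom t y -> pa_act t (g y) = y &
          {within pa_dom t, continuous g}];
  pa_act_inter : forall s t,
      pa_act s @` (pa_dom (tg_inv s) `&` pa_dom t) = pa_dom s `&` pa_dom (tg_mul s t);
  pa_act_comp : forall s t x, pa_dom (tg_inv t) x ->
      pa_dom (tg_mul (tg_inv t) (tg_inv s)) x ->
      pa_act s (pa_act t x) = pa_act (tg_mul s t) x;
  pa_Gamma_open : open [set p : G * X | pa_dom (tg_inv p.1) p.2];
  pa_Gamma_cont : {within [set p : G * X | pa_dom (tg_inv p.1) p.2],
                    continuous (fun p : G * X => pa_act p.1 p.2)}
}.

Arguments pa_dom {_ _}. Arguments pa_act {_ _}.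

Definition Gamma {G : topgroup} {X : topologicalType} (s : partial_action G X)
  : set (G * X) := [set p | pa_dom s (tg_inv p.1) p.2].

Definition Fsigma {G : topgroup} {X : topologicalType} (s : partial_action G X)
  (p : G * X) : X * X := (pa_act s p.1 p.2, p.2).

Definition global_action {G : topgroup} {Y : topologicalType} (th : G -> Y -> Y) :=
  [/\ forall y, th tg_one y = y,
      forall s t y, th s (th t y) = th (tg_mul s t) y &
      continuous (fun p : G * Y => th p.1 p.2)].

(* Proper map: preimages of compact sets are compact.  For a map defined on a
   subspace D, compactness of a subset of D is compactness in the ambient space. *)
Definition proper_on {A B : topologicalType} (D : set A) (f : A -> B) :=
  forall K : set B, compact K -> compact (D `&` f @^-1` K).

Definition proper_action {G : topgroup} {Y : topologicalType} (th : G -> Y -> Y) :=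
  proper_on setT (fun p : G * Y => (th p.1 p.2, p.2)).

Definition lc_hausdorff (T : topologicalType) :=
  locally_compact [set: T] /\ hausdorff_space T.

(* (Y, iota, th) is (a model of) the enveloping action of s: th is a continuous
   global action on Y, iota : X -> Y is an open embedding (identifying X with
   an open subset of Y), X_t = X cap th_t(X), sigma_t = th_t on X_{t^-1},
   and Y = U_t th_t(X). *)
Definition enveloping_action {G : topgroup} {X Y : topologicalType}
  (s : partial_action G X) (iota : X -> Y) (th : G -> Y -> Y) :=
  [/\ global_action th,
      [/\ continuous iota, injective iota &
          forall U : set X, open U -> open (iota @` U)],
      forall t, iota @` pa_dom s t = range iota `&` th t @` range iota,
      forall t x, pa_dom s (tg_inv t) x -> th t (iota x) = iota (pa_act s t x) &
      [set: Y] = \bigcup_(t in [set: G]) th t @` range iota].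

Record directed_set := DirectedSet {
  dir_carrier :> Type;
  dir_le : dir_carrier -> dir_carrier -> Prop;
  dir_refl : forall i, dir_le i i;
  dir_trans : forall i j k, dir_le i j -> dir_le j k -> dir_le i k;
  dir_inhabited : inhabited dir_carrier;
  dir_upper : forall i j, exists k, dir_le i k /\ dir_le j k
}.

Arguments dir_le {_}.

Definition net_converges {T : topologicalType} {I : directed_set}
  (x : I -> T) (p : T) :=
  forall U, nbhs p U -> exists i0, forall i, dir_le i0 i -> U (x i).

(* There is a subnet (in the sense of Willard) of x converging to a point of A. *)
Definition has_subnet_converging_in {T : topologicalType} {I : directed_set}
  (x : I -> T) (A : set T) :=
  exists (J : directed_set) (h : J -> I),
    (forall i, exists j0, forall j, dir_le j0 j -> dir_le i (h j)) /\
    exists2 p, A p & net_converges (x \o h) p.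

(* Main.v *)
Require Import Defs.
From HB Require Import structures.
From mathcomp Require Import all_boot all_order all_algebra.
From mathcomp Require Import all_classical all_reals all_analysis.
Local Open Scope classical_set_scope.

Module ProofHelpers.
Set Implicit Arguments. Unset Strict Implicit. Unset Printing Implicit Defensive.

Lemma contE {A B : topologicalType} (f : A -> B) x :
  {for x, continuous f} -> forall W, nbhs (f x) W -> nbhs x (f @^-1` W).
Proof. by move=> cf W /cf. Qed.

Lemma contI {A B : topologicalType} (f : A -> B) x :
  (forall W, nbhs (f x) W -> nbhs x (f @^-1` W)) -> {for x, continuous f}.
Proof. by move=> cf W /cf. Qed.

Lemma nbhs_prodP {A B : topologicalType} (p : A * B) W :
  nbhs p W <-> exists P Q, [/\ nbhs p.1 P, nbhs p.2 Q & P `*` Q `<=` W].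
Proof.
split.
  by case=> [[P Q]] /= [hP hQ] sub; exists P, Q; split.
by case=> P [Q [hP hQ sub]]; exists (P, Q).
Qed.

Lemma nbhs_prodX {A B : topologicalType} (p : A * B) P Q :
  nbhs p.1 P -> nbhs p.2 Q -> nbhs p (P `*` Q).
Proof. by move=> hP hQ; apply: (proj2 (nbhs_prodP _ _)); exists P, Q; split. Qed.

Lemma cont_pair {A B C : topologicalType} (f : A -> B) (g : A -> C) x :
  {for x, continuous f} -> {for x, continuous g} ->
  {for x, continuous (fun a => (f a, g a))}.
Proof.
move=> cf cg; apply: contI => W; move/nbhs_prodP => [P [Q [hP hQ sub]]].
have hf := contE cf hP; have hg := contE cg hQ.
apply: filterS (filterI hf hg) => y [Py Qy]; exact: sub.
Qed.

Lemma hausdorff_prod {A B : topologicalType} :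
  hausdorff_space A -> hausdorff_space B -> hausdorff_space (A * B)%type.
Proof.
move=> hA hB [p1 p2] [q1 q2] cl.
have e1 : p1 = q1.
  apply: hA => U V nU nV.
  have := cl (U `*` setT) (V `*` setT) (@nbhs_prodX _ _ (p1,p2) _ _ nU filterT) (@nbhs_prodX _ _ (q1,q2) _ _ nV filterT).
  by case=> [[z1 z2]] [[/= ? _] [/= ? _]]; exists z1.
have e2 : p2 = q2.
  apply: hB => U V nU nV.
  have := cl (setT `*` U) (setT `*` V) (@nbhs_prodX _ _ (p1,p2) _ _ filterT nU) (@nbhs_prodX _ _ (q1,q2) _ _ filterT nV).
  by case=> [[z1 z2]] [[_ /= ?] [_ /= ?]]; exists z2.
by rewrite e1 e2.
Qed.

Lemma lc_nbhs {T : topologicalType} : lc_hausdorff T -> forall x : T,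
  exists K, [/\ nbhs x K, compact K & closed K].
Proof.
case=> lc _ x; have := lc x I; rewrite withinET.
by case=> K nK [cK clK]; exists K.
Qed.

Definition evf {I : directed_set} {T : Type} (x : I -> T) : set_system T :=
  [set A | exists i0, forall i, dir_le i0 i -> A (x i)].

Lemma evf_proper {I : directed_set} {T : Type} (x : I -> T) : ProperFilter (evf x).
Proof.
apply: Build_ProperFilter.
  case=> i0 h; case: (dir_upper i0 i0) => k [hk _]; exact: (h k hk).
constructor.
- by case: (dir_inhabited I) => i; exists i.
- move=> P Q [i hi] [j hj]; case: (dir_upper i j) => k [ik jk].
  exists k => l kl; split; [apply: hi | apply: hj]; exact: dir_trans kl.
- by move=> P Q PQ [i hi]; exists i => j /hi /PQ.
Qed.

Definition cofinal {I J : directed_set} (h : J -> I) :=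
  forall i, exists j0, forall j, dir_le j0 j -> dir_le i (h j).

Lemma net_sub {I J : directed_set} {T : topologicalType} (x : I -> T) (h : J -> I) p :
  cofinal h -> net_converges x p -> net_converges (x \o h) p.
Proof.
move=> ch cx U nU; case: (cx U nU) => i0 hi; case: (ch i0) => j0 hj.
by exists j0 => j /hj /hi.
Qed.

Lemma cofinal_comp {I J K : directed_set} (h1 : J -> I) (h2 : K -> J) :
  cofinal h1 -> cofinal h2 -> cofinal (h1 \o h2).
Proof.
move=> c1 c2 i; case: (c1 i) => j0 hj; case: (c2 j0) => k0 hk.
by exists k0 => k /hk /hj.
Qed.

Lemma net_cont {I : directed_set} {T U : topologicalType} (x : I -> T) (f : T -> U) p :
  {for p, continuous f} -> net_converges x p -> net_converges (f \o x) (f p).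
Proof. by move=> cf cx W /(contE cf) /cx. Qed.

Lemma net_unique {I : directed_set} {T : topologicalType} (x : I -> T) p q :
  hausdorff_space T -> net_converges x p -> net_converges x q -> p = q.
Proof.
move=> hT cp cq; apply: hT => U V nU nV.
case: (cp U nU) => i hi; case: (cq V nV) => j hj; case: (dir_upper i j) => k [ik jk].
by exists (x k); split; [apply: hi | apply: hj].
Qed.

Section SubnetConstr.
Variables (T : topologicalType) (I : directed_set) (p : T).
Definition Jt := {ij : I * set T | nbhs p ij.2}.
Definition Jle (a b : Jt) := dir_le (sval a).1 (sval b).1 /\ (sval b).2 `<=` (sval a).2.
Lemma Jle_refl a : Jle a a.
Proof. by split; [apply: dir_refl|]. Qed.
Lemma Jle_trans a b c : Jle a b -> Jle b c -> Jle a c.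
Proof.
case=> h1 h2 [h3 h4]; split; first exact: dir_trans h3.
by move=> z /h4 /h2.
Qed.
Lemma J_inh : inhabited Jt.
Proof. by case: (dir_inhabited I) => i; constructor; exact: (@exist _ (fun ij : I * set T => nbhs p ij.2) (i, setT) filterT). Qed.
Lemma J_up a b : exists c, Jle a c /\ Jle b c.
Proof.
case: a b => [[i U] nU] [[j V] nV]; case: (dir_upper i j) => k [ik jk].
exists (exist _ (k, U `&` V) (filterI nU nV)); split; split => //=; by move=> z [].
Qed.
Definition Jdir := DirectedSet Jle_refl Jle_trans J_inh J_up.
End SubnetConstr.

Lemma compact_net {T : topologicalType} (C : set T) {I : directed_set} (x : I -> T) :
  compact C -> evf x C -> has_subnet_converging_in x C.
Proof.
move=> cC hC.
case: (cC (evf x) (evf_proper x) hC) => p [Cp clp].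
have ex : forall ij : Jdir I p, exists k, dir_le (sval ij).1 k /\ (sval ij).2 (x k).
  move=> [[i U] /= nU].
  have ev : evf x [set x k | k in [set k | dir_le i k]] by exists i => j hj; exists j.
  by case: (clp _ U ev nU) => _ [[k ik <-] Uxk]; exists k.
case: (choice ex) => h hh.
exists (Jdir I p), h; split.
  move=> i; exists (@exist _ (fun ij : I * set T => nbhs p ij.2) (i, setT) filterT) => j [/= ij _].
  by apply: dir_trans ij (proj1 (hh j)).
exists p => // U nU.
case: (dir_inhabited I) => i0.
exists (exist _ (i0, U) nU) => j [/= _ sub].
by apply: sub; exact: (proj2 (hh j)).
Qed.

Section NetCompactConstr.
Variables (T : Type) (F : set_system T) (A : set T).
Hypothesis PF : ProperFilter F.
Hypothesis FA : F A.
Definition Kt := {Va : set T * T | F Va.1 /\ Va.1 Va.2 /\ A Va.2}.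
Definition Kle (a b : Kt) := (sval b).1 `<=` (sval a).1.
Lemma Kle_refl a : Kle a a. Proof. by []. Qed.
Lemma Kle_trans a b c : Kle a b -> Kle b c -> Kle a c.
Proof. by move=> h1 h2 z /h2 /h1. Qed.
Lemma K_inh : inhabited Kt.
Proof.
case: (filter_ex FA) => a Aa; constructor.
by exists (A, a).
Qed.
Lemma K_up a b : exists c, Kle a c /\ Kle b c.
Proof.
destruct a as [[V v] [FV hv]]; destruct b as [[W w] [FW hw]].
have FVWA : F (V `&` W `&` A) by apply: filterI => //; exact: filterI.
case: (filter_ex FVWA) => c [[Vc Wc] Ac].
have FVW : F (V `&` W) by exact: filterI.
exists (exist _ (V `&` W, c) (conj FVW (conj (conj Vc Wc) Ac))).
by split => z /= [].
Qed.
Definition Kdir := DirectedSet Kle_refl Kle_trans K_inh K_up.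
End NetCompactConstr.

Lemma net_compact {T : topologicalType} (A : set T) :
  (forall (I : directed_set) (x : I -> T), (forall i, A (x i)) ->
     has_subnet_converging_in x A) -> compact A.
Proof.
move=> H F PF FA.
have := H (Kdir PF FA) (fun k => (sval k).2) (fun k => proj2 (proj2 (svalP k))).
case=> J [h [cof [q Aq conv]]].
exists q; split => // W U FW nU.
have FWA : F (W `&` A) by exact: filterI.
case: (filter_ex FWA) => a [Wa Aa].
pose i : Kdir PF FA := exist _ (W `&` A, a) (conj FWA (conj (conj Wa Aa) Aa)).
case: (cof i) => j0 hj0; case: (conv U nU) => j1 hj1.
case: (dir_upper j0 j1) => j2 [h02 h12].
have hi := hj0 j2 h02; have hU := hj1 j2 h12.
exists (sval (h j2)).2; split => //.
have := proj1 (proj2 (svalP (h j2))) => /hi; case => //.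
Qed.

Section Grp.
Variable G : topgroup.
Implicit Types a b : G.
Lemma mulKg a b : tg_mul (tg_inv a) (tg_mul a b) = b.
Proof. by rewrite tg_mulA tg_mulVg tg_mul1g. Qed.
Lemma mulKVg a b : tg_mul a (tg_mul (tg_inv a) b) = b.
Proof. by rewrite tg_mulA tg_mulgV tg_mul1g. Qed.
Lemma mulgK a b : tg_mul (tg_mul b a) (tg_inv a) = b.
Proof. by rewrite -tg_mulA tg_mulgV tg_mulg1. Qed.
End Grp.

Lemma cst_cont {A B : topologicalType} (c : B) (x : A) : {for x, continuous (fun _ : A => c)}.
Proof. apply: contI => W /nbhs_singleton Wc; apply: filterS filterT => ? _; exact: Wc. Qed.

Arguments cst_cont {A B} c x.

Lemma id_cont {A : topologicalType} (x : A) : {for x, continuous (fun y : A => y)}.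
Proof. by apply: contI. Qed.

Arguments id_cont {A} x.

Lemma fst_cont {A B : topologicalType} (p : A * B) : {for p, continuous fst}.
Proof.
apply: contI => W nW; apply: filterS (@nbhs_prodX _ _ p _ _ nW filterT).
by move=> z [].
Qed.

Lemma snd_cont {A B : topologicalType} (p : A * B) : {for p, continuous snd}.
Proof.
apply: contI => W nW; apply: filterS (@nbhs_prodX _ _ p _ _ filterT nW).
by move=> z [].
Qed.

Arguments fst_cont {A B} p.
Arguments snd_cont {A B} p.

Lemma comp_cont {A B C : topologicalType} (f : A -> B) (g : B -> C) :
  continuous f -> continuous g -> continuous (fun x => g (f x)).
Proof. by move=> cf cg x; apply: (continuous_comp (cf x) (cg (f x))). Qed.

Lemma mul_contl (G : topgroup) (a : G) : continuous (fun g : G => tg_mul a g).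
Proof.
move=> x; have := continuous_comp (cont_pair (cst_cont a x) (id_cont x)) (@tg_mul_cont G (a, x)).
by [].
Qed.

Lemma mul_contr (G : topgroup) (a : G) : continuous (fun g : G => tg_mul g a).
Proof.
move=> x; have := continuous_comp (cont_pair (id_cont x) (cst_cont a x)) (@tg_mul_cont G (x, a)).
by [].
Qed.

Section Env.
Variables (G : topgroup) (X Y : topologicalType) (s : partial_action G X)
  (iota : X -> Y) (th : G -> Y -> Y).
Hypothesis env : enveloping_action s iota th.

Lemma th_one y : th tg_one y = y.
Proof. by case: env => [[h _ _] _ _ _ _]. Qed.
Lemma th_comp a b y : th a (th b y) = th (tg_mul a b) y.
Proof. by case: env => [[_ h _] _ _ _ _]. Qed.
Lemma th_jcont p : {for p, continuous (fun p : G * Y => th p.1 p.2)}.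
Proof. by case: env => [[_ _ h] _ _ _ _]; apply: h. Qed.
Lemma th_inv a y : th (tg_inv a) (th a y) = y.
Proof. by rewrite th_comp tg_mulVg th_one. Qed.
Lemma th_invK a y : th a (th (tg_inv a) y) = y.
Proof. by rewrite th_comp tg_mulgV th_one. Qed.
Lemma iota_cont x : {for x, continuous iota}.
Proof. by case: env => [_ [h _ _] _ _ _]; apply: h. Qed.
Lemma iota_inj : injective iota.
Proof. by case: env => [_ [_ h _] _ _ _]. Qed.
Lemma iota_open U : open U -> open (iota @` U).
Proof. by case: env => [_ [_ _ h] _ _ _]; apply: h. Qed.
Lemma th_act t x : pa_dom s (tg_inv t) x -> th t (iota x) = iota (pa_act s t x).
Proof. by case: env => [_ _ _ h _]; apply: h. Qed.

Lemma th_cont a y : {for y, continuous (th a)}.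
Proof.
 have := continuous_comp (cont_pair (cst_cont a y) (id_cont y)) (th_jcont (p:=(a, y))).
by [].
Qed.

Lemma th_nbhs a y A : nbhs y A -> nbhs (th a y) (th a @` A).
Proof.
move=> nA.
have : nbhs (th a y) (th (tg_inv a) @^-1` A).
  apply: (contE (th_cont (a:=tg_inv a) (y:=th a y))); by rewrite th_inv.
apply: filterS => z Az; exists (th (tg_inv a) z) => //; exact: th_invK.
Qed.

Lemma iota_nbhs x Q : nbhs x Q -> nbhs (iota x) (iota @` Q).
Proof.
rewrite nbhsE => -[B [oB Bx] BQ].
apply: filterS (open_nbhs_nbhs (conj (iota_open oB) (ex_intro2 _ _ x Bx erefl))).
by move=> _ [z Bz <-]; exists z => //; exact: BQ.
Qed.

Lemma key t x x' : th t (iota x) = iota x' ->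
  pa_dom s (tg_inv t) x /\ pa_act s t x = x'.
Proof.
move=> e.
have hd : (range iota `&` th (tg_inv t) @` range iota) (iota x).
  split; first by exists x.
  by exists (iota x'); [exists x' | rewrite -e th_inv].
have dx : pa_dom s (tg_inv t) x.
  case: env => [_ _ hdom _ _]; move: hd; rewrite -hdom => -[z dz /iota_inj <-] //.
split => //; apply: iota_inj; by rewrite -th_act.
Qed.

Lemma cover y : exists a x, y = th a (iota x).
Proof.
case: env => [_ _ _ _ hcov].
have : [set: Y] y by [].
by rewrite hcov => -[t _ [z [x _ <-] <-]]; exists t, x.
Qed.

End Env.

Arguments th_cont {G X Y s iota th} env a y.
Arguments th_jcont {G X Y s iota th} env p.
Arguments iota_cont {G X Y s iota th} env x.


Lemma Fsigma_cont (G : topgroup) (X : topologicalType) (s : partial_action G X) p :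
  Gamma s p -> {for p, continuous (Fsigma s)}.
Proof.
move=> Gp.
have hc : {within Gamma s, continuous (fun p : G * X => pa_act s p.1 p.2)} :=
  fun x => @pa_Gamma_cont G X s x.
rewrite continuous_open_subspace in hc; last exact: pa_Gamma_open.
have c1 : {for p, continuous (fun p : G * X => pa_act s p.1 p.2)}.
  by apply: hc; rewrite inE.
have := cont_pair c1 (snd_cont p); by [].
Qed.

Lemma sigma_cont (G : topgroup) (X : topologicalType) (s : partial_action G X) t x :
  pa_dom s (tg_inv t) x -> {for x, continuous (pa_act s t)}.
Proof.
move=> dx; have hc : {within pa_dom s (tg_inv t), continuous (pa_act s t)} :=
  fun x => @pa_act_cont G X s t x.
rewrite continuous_open_subspace in hc; last exact: pa_dom_open.
by apply: hc; rewrite inE.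
Qed.

Lemma c3_c2 (G : topgroup) (X : topologicalType) (s : partial_action G X) :
  lc_hausdorff X -> proper_on (Gamma s) (Fsigma s) ->
  forall (I : directed_set) (net : I -> G * X),
      (forall i, Gamma s (net i)) ->
      (exists q : X * X, net_converges (Fsigma s \o net) q) ->
      has_subnet_converging_in net (Gamma s).
Proof.
move=> lcX pr I net hG [q cq].
case: (lc_nbhs lcX q.1) => K1 [n1 c1 _]; case: (lc_nbhs lcX q.2) => K2 [n2 c2 _].
have cC := pr _ (compact_setX c1 c2).
case: (cq _ (nbhs_prodX n1 n2)) => i0 hi0.
have ev : evf net (Gamma s `&` Fsigma s @^-1` (K1 `*` K2)).
  by exists i0 => i /hi0 h; split.
case: (compact_net cC ev) => J [h [cof [p [Gp _] cp]]].
by exists J, h; split => //; exists p.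
Qed.

Lemma c2_c3 (G : topgroup) (X : topologicalType) (s : partial_action G X) :
  hausdorff_space X ->
  (forall (I : directed_set) (net : I -> G * X),
      (forall i, Gamma s (net i)) ->
      (exists q : X * X, net_converges (Fsigma s \o net) q) ->
      has_subnet_converging_in net (Gamma s)) ->
  proper_on (Gamma s) (Fsigma s).
Proof.
move=> hX H K cK; apply: net_compact => I x hx.
have ev : evf (Fsigma s \o x) K.
  by case: (dir_inhabited I) => i; exists i => j _; exact: (proj2 (hx j)).
case: (compact_net cK ev) => J1 [h1 [cof1 [q Kq cq]]].
have := H J1 (x \o h1) (fun j => proj1 (hx (h1 j))) (ex_intro _ q cq).
case=> J2 [h2 [cof2 [p Gp cp]]].
exists J2, (h1 \o h2); split; first exact: cofinal_comp.
exists p => //; split => //.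
have e : Fsigma s p = q.
  apply: (@net_unique _ _ (Fsigma s \o (x \o h1) \o h2) _ _ (hausdorff_prod hX hX)).
    exact: (net_cont (Fsigma_cont Gp) cp).
  exact: (net_sub cof2 cq).
by rewrite /preimage /= e.
Qed.

Lemma compact_pullback {A B : topologicalType} (j : A -> B) (C : set A) :
  injective j -> (forall a U, nbhs a U -> nbhs (j a) (j @` U)) ->
  compact (j @` C) -> compact C.
Proof.
move=> ij nj cj F PF FC.
have FjC : F (j @^-1` (j @` C)).
  by apply: filterS FC => z Cz; exists z.
case: (cj (j @ F) (fmap_proper_filter j PF) FjC) => z [[c Cc <-] clz].
exists c; split => // W U FW nU.
have FjW : F (j @^-1` (j @` W)).
  by apply: filterS FW => w Ww; exists w.
case: (clz _ _ FjW (nj _ _ nU)) => _ [[w Ww <-] [u Uu /ij e]].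
by exists w; split => //; rewrite -e.
Qed.

Lemma c1_c3 (G : topgroup) (X Y : topologicalType) (s : partial_action G X)
  (iota : X -> Y) (th : G -> Y -> Y) :
  enveloping_action s iota th -> proper_action th -> proper_on (Gamma s) (Fsigma s).
Proof.
move=> env pr K cK.
pose ii := fun z : X * X => (iota z.1, iota z.2).
have cii : continuous ii.
  move=> z; apply: cont_pair.
    exact: (continuous_comp (fst_cont z) (iota_cont env z.1)).
  exact: (continuous_comp (snd_cont z) (iota_cont env z.2)).
have cK' : compact (ii @` K) := continuous_compact (continuous_subspaceT cii) cK.
have := pr _ cK'.
pose j := fun p : G * X => (p.1, iota p.2).
have E : setT `&` (fun p : G * Y => (th p.1 p.2, p.2)) @^-1` (ii @` K) =
         j @` (Gamma s `&` Fsigma s @^-1` K).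
  rewrite eqEsubset; split.
    move=> [t y] [_ /= [[a b] Kab e]].
    case: e => e1 e2; subst y.
    have [dx ex] := key env (esym e1).
    exists (t, b) => //; split => //.
    by rewrite /preimage /Fsigma /= ex.
  move=> _ [[t x] [Gx Kx] <-]; split => //.
  exists (Fsigma s (t, x)) => //.
  by rewrite /ii /Fsigma /= (th_act env Gx).
rewrite E => cj; apply: compact_pullback cj.
  by move=> [a b] [c d] [-> /(iota_inj env) ->].
move=> [t x] U /nbhs_prodP [P [Q [nP nQ sub]]].
apply: filterS (@nbhs_prodX _ _ (t, iota x) _ _ nP (iota_nbhs env nQ)).
move=> [a y] [/= Pa [z Qz ezy]]; exists (a, z); first exact: sub.
by rewrite /j /= ezy.
Qed.

Section C3C1.
Variables (G : topgroup) (X Y : topologicalType) (s : partial_action G X)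
  (iota : X -> Y) (th : G -> Y -> Y).
Hypothesis env : enveloping_action s iota th.
Hypothesis lcG : lc_hausdorff G.
Hypothesis lcX : lc_hausdorff X.
Hypothesis pr : proper_on (Gamma s) (Fsigma s).

Lemma hausY : hausdorff_space Y.
Proof.
move=> p q cl.
case: (cover env p) => sa [a ep]; case: (cover env q) => r [b eq]; subst p q.
pose t := tg_mul (tg_inv sa) r.
have meet : forall U V, nbhs a U -> nbhs b V ->
    exists v, [/\ pa_dom s (tg_inv t) v, U (pa_act s t v) & V v].
  move=> U V nU nV.
  have := cl _ _ (th_nbhs env sa (iota_nbhs env nU)) (th_nbhs env r (iota_nbhs env nV)).
  case=> y [[_ [u Uu <-] e1] [_ [v Vv <-] e2]].
  have e : th t (iota v) = iota u.
    by rewrite /t -(th_comp env) e2 -e1 (th_inv env).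
  have [dv ev] := key env e.
  by exists v; split => //; rewrite ev.
pose Psi : set_system X := fun P : set X => exists N, nbhs (a, b) N /\
   forall v, pa_dom s (tg_inv t) v -> N (pa_act s t v, v) -> P v.
have PPsi : ProperFilter Psi.
  apply: Build_ProperFilter.
    case=> N [nN hN]; case/nbhs_prodP: nN => U [V [nU nV sub]].
    case: (meet U V nU nV) => v [dv Uv Vv].
    by apply: (hN v dv); apply: sub.
  constructor.
  - by exists setT; split => //; exact: filterT.
  - move=> P Q [N1 [n1 h1]] [N2 [n2 h2]]; exists (N1 `&` N2); split.
      exact: filterI.
    by move=> v dv [? ?]; split; [apply: h1 | apply: h2].
  - by move=> P Q PQ [N [nN hN]]; exists N; split => // v dv /(hN v dv) /PQ.
case: (lc_nbhs lcX a) => Ka [nKa cKa _]; case: (lc_nbhs lcX b) => Kb [nKb cKb _].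
have cC : compact (Gamma s `&` Fsigma s @^-1` (Ka `*` Kb)).
  by apply: pr; exact: compact_setX.
pose Phi := fmap (fun v => (t, v)) Psi.
have PPhi : ProperFilter Phi := fmap_proper_filter _ PPsi.
have PhiC : Phi (Gamma s `&` Fsigma s @^-1` (Ka `*` Kb)).
  exists (Ka `*` Kb); split; first exact: (@nbhs_prodX _ _ (a, b)).
  by move=> v dv hN; split.
case: (cC Phi PPhi PhiC) => [[t' x']] [[Gp _] clp].
have et : t' = t.
  apply: (proj2 lcG) => A B nA nB.
  have Phi1 : Phi [set z | z.1 = t].
    by exists setT; split => //; exact: filterT.
  case: (clp _ _ Phi1 (@nbhs_prodX _ _ (t', x') _ _ nA filterT)) => z [e [Az _]].
  by exists t; split; [rewrite -e | exact: nbhs_singleton nB].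
have ex : b = x'.
  apply: (proj2 lcX) => V W nV nW.
  have Phi2 : Phi [set z | V z.2].
    exists (setT `*` V); split; first exact: (@nbhs_prodX _ _ (a, b) _ _ filterT nV).
    by move=> v _ [_ ?].
  case: (clp _ _ Phi2 (@nbhs_prodX _ _ (t', x') _ _ filterT nW)) => z [Vz [_ Wz]].
  by exists z.2.
subst t' x'.
have db : pa_dom s (tg_inv t) b := Gp.
have ea : a = pa_act s t b.
  apply: (proj2 lcX) => U W nU nW.
  have nV := contE (sigma_cont db) nW.
  case: (meet U _ nU nV) => v [dv Uv Wv].
  by exists (pa_act s t v).
by rewrite ea -(th_act env db) (th_comp env) /t mulKVg.
Qed.

Lemma lcY : locally_compact [set: Y].
Proof.
move=> y _; rewrite withinET.
case: (cover env y) => a [x ->].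
case: (lc_nbhs lcX x) => K [nK cK _].
exists (th a @` (iota @` K)).
  have := th_nbhs env a (iota_nbhs env nK); exact.
have ciK : compact (iota @` K).
  apply: continuous_compact cK; apply: continuous_subspaceT; exact: iota_cont env.
have cK' : compact (th a @` (iota @` K)).
  apply: continuous_compact ciK; apply: continuous_subspaceT; exact: th_cont env a.
by split => //; apply: compact_closed hausY cK'.
Qed.

End C3C1.

Section C3C1b.
Variables (G : topgroup) (X Y : topologicalType) (s : partial_action G X)
  (iota : X -> Y) (th : G -> Y -> Y).
Hypothesis env : enveloping_action s iota th.
Hypothesis hY : hausdorff_space Y.
Hypothesis lcX : lc_hausdorff X.
Hypothesis pr : proper_on (Gamma s) (Fsigma s).

Lemma properY : proper_action th.
Proof.
move=> L cL.
pose psi := fun p : G * Y => (th p.1 p.2, p.2).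
have cpsi : continuous psi.
  move=> p; apply: cont_pair; first exact: th_jcont env p.
  exact: snd_cont p.
have clD : closed (psi @^-1` L).
  apply: preimage_closed; first by move=> p _; exact: cpsi.
  exact: compact_closed (hausdorff_prod hY hY) cL.
move=> Phi PPhi PhiD.
have PhiL : Phi (psi @^-1` L) by apply: filterS PhiD => z [].
case: (cL (fmap psi Phi) (fmap_proper_filter psi PPhi) PhiL) => -[u w] [Lz clz].
case: (cover env u) => sa [a eu]; case: (cover env w) => r [b ew].
case: (lc_nbhs lcX a) => Ka [nKa cKa _]; case: (lc_nbhs lcX b) => Kb [nKb cKb _].
have cC : compact (Gamma s `&` Fsigma s @^-1` (Ka `*` Kb)).
  by apply: pr; exact: compact_setX.
pose chi := fun p : G * X => (tg_mul (tg_mul sa p.1) (tg_inv r), th r (iota p.2)).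
have cchi : continuous chi.
  move=> p.
  have c1 : {for p, continuous (fun p : G * X => tg_mul (tg_mul sa p.1) (tg_inv r))}.
    apply: (@continuous_comp _ _ _ fst (fun g => tg_mul (tg_mul sa g) (tg_inv r)) p (fst_cont p)).
    exact: (comp_cont (mul_contl (a:=sa)) (mul_contr (a:=tg_inv r))).
  have c2 : {for p, continuous (fun p : G * X => th r (iota p.2))}.
    apply: (@continuous_comp _ _ _ snd (fun x => th r (iota x)) p (snd_cont p)).
    apply: (@continuous_comp _ _ _ iota (th r) p.2 (iota_cont env p.2)).
    exact: th_cont env r _.
  have := cont_pair c1 c2; exact.
pose Q := chi @` (Gamma s `&` Fsigma s @^-1` (Ka `*` Kb)) `&` psi @^-1` L.
have cQ : compact Q.
  apply: compact_closedI clD; apply: continuous_compact cC.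
  exact: continuous_subspaceT cchi.
pose N := (th sa @` (iota @` Ka)) `*` (th r @` (iota @` Kb)).
have nN : nbhs (u, w) N.
  apply: nbhs_prodX => /=; rewrite ?eu ?ew.
    have := th_nbhs env sa (iota_nbhs env nKa); exact.
  have := th_nbhs env r (iota_nbhs env nKb); exact.
pose Phi' := within (psi @^-1` N) Phi.
have FPhi' : Filter Phi'.
  rewrite /Phi'; apply: within_filter.
have PPhi' : ProperFilter Phi'.
  apply: (@Build_ProperFilter _ Phi' _ FPhi').
  move=> h; rewrite /Phi' /within /= in h.
  have Fh : Phi (psi @^-1` (psi @` [set x | N (psi x) -> False])).
    by apply: filterS h => z hz; exists z.
  case: (clz _ _ Fh nN) => _ [[z hz <-] Nz].
  exact: hz.
have Phi'Q : Phi' Q.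
  rewrite /Phi' /within /=.
  apply: filterS PhiD => -[t y] [_ Dy] [/= [_ [x2 K2 <-] e2] [_ [x1 K1 <-] e1]].
  split => //.
  pose t' := tg_mul (tg_inv sa) (tg_mul t r).
  have e : th t' (iota x1) = iota x2.
    by rewrite /t' -!(th_comp env) e1 -e2 (th_inv env).
  have [dx ex] := key env e.
  exists (t', x1).
    split => //; by rewrite /preimage /Fsigma /= ex.
  by rewrite /chi /t' /= mulKVg mulgK e1.
case: (cQ Phi' PPhi' Phi'Q) => c [Qc clc].
exists c; split; first by split => //; case: Qc.
move=> A B PA nB; apply: clc nB.
by rewrite /Phi' /within /=; apply: filterS PA => z Az _.
Qed.

End C3C1b.
End ProofHelpers.
Import ProofHelpers.

Theorem proposition1p10 (G : topgroup) (X : topologicalType)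
  (s : partial_action G X) (Y : topologicalType) (iota : X -> Y)
  (th : G -> Y -> Y) :
  lc_hausdorff G -> lc_hausdorff X -> enveloping_action s iota th ->
  let cond1 := lc_hausdorff Y /\ proper_action th in
  let cond2 := forall (I : directed_set) (net : I -> G * X),
      (forall i, Gamma s (net i)) ->
      (exists q : X * X, net_converges (Fsigma s \o net) q) ->
      has_subnet_converging_in net (Gamma s) in
  let cond3 := proper_on (Gamma s) (Fsigma s) in
  (cond1 <-> cond2) /\ (cond2 <-> cond3).
Proof.
move=> lcG lcX env cond1 cond2 cond3.
have h13 : cond1 -> cond3 by case=> _ pa; exact: c1_c3 env pa.
have h32 : cond3 -> cond2 by exact: c3_c2 lcX.
have h23 : cond2 -> cond3 by exact: c2_c3 (proj2 lcX).
have h31 : cond3 -> cond1.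
  move=> h3; have hY := hausY env lcG lcX h3.
  split; first by split => //; exact: lcY env lcG lcX h3.
  exact: properY env hY lcX h3.
split; split => h.
- exact: h32 (h13 h).
- exact: h31 (h23 h).
- exact: h23 h.
- exact: h32 h.
Qed.
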